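(* If $\Gamma\vdash\phi$ is derivable in $\mathsf{MILLs}$, then $\Gamma\models\phi$ over the class of modal Kripke resource algebras.
   Context: $\mathsf{ILLs}$: formulas $\phi::= p\mid \mathbf{1}\mid\top\mid\bot\mid \sim\phi\mid\phi\otimes\phi\mid\phi\multimap\phi\mid\phi\,\&\,\phi\mid\phi\oplus\phi$, with the standard Hilbert system of intuitionistic multiplicative-additive linear logic extended with strong negation axioms ($\phi\multimap\sim\sim\phi$, $\sim\sim\phi\multimap\phi$, $\sim\mathbf1\multimap\phi$, $\sim\top\multimap\phi$, $\phi\multimap\sim\bot$, and mutual implications $\sim(\phi\multimap\psi)\leftrightarrow\sim\phi\otimes\psi$ resp. $\phi\otimes\sim\psi$ as written: $\sim(\phi\multimap\psi)\multimap\sim\phi\otimes\psi$, $\phi\otimes\sim\psi\multimap\sim(\phi\multimap\psi)$, $\sim(\phi\&\psi)\leftrightarrow\sim\phi\oplus\sim\psi$, $\sim(\phi\oplus\psi)\leftrightarrow\sim\phi\&\sim\psi$, $\sim(\phi\otimes\psi)\leftrightarrow\sim\phi\otimes\sim\psi$); deductions are trees on sequents $\Gamma\vdash\phi$ with $\Gamma$ a finite multiset, leaves $\phi\vdash\phi$ or $\vdash$axiom, rules: from $\Gamma\vdash\phi$, $\Gamma'\vdash\phi\multimap\psi$ infer $\Gamma,\Gamma'\vdash\psi$; from $\Gamma\vdash\phi$, $\Gamma\vdash\psi$ infer $\Gamma\vdash\phi\&\psi$. $\mathsf{MILLs}$ adds a modality $\Box$ and the rule $\Box$(re): from $\vdash\phi\multimap\psi$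 and $\vdash\psi\multimap\phi$ infer $\vdash\Box\phi\multimap\Box\psi$. A Kripke resource algebra is $\langle M,\cap,\circ,e,\omega\rangle$ where $\langle M,\cap\rangle$ is a meet-semilattice with greatest element $\omega$ and order $x\leq y$ iff $x\cap y=x$; $\langle M,\circ,e\rangle$ is a commutative monoid with $x\circ\omega=\omega$, and $z\circ(x\cap y)\circ w=(z\circ x\circ w)\cap(z\circ y\circ w)$. A modal Kripke resource algebra adds $N^+,N^-:M\to\mathcal P(\mathcal P(M))$ with $X\in N^{\pm}(m\cap n)$ iff $X\in N^{\pm}(m)$ and $X\in N^{\pm}(n)$. A model adds valuations $V^+,V^-:Atom\to\mathcal P(M)$ with $m\cap n\in V^{\pm}(p)$ iff $m\in V^\pm(p)$ and $n\in V^\pm(p)$. Verification $\models^+$ and falsification $\models^-$: $m\models^+p$ iff $m\in V^+(p)$; $m\models^+\mathbf1$ iff $e\leq m$; $m\models^+\top$ always; $m\models^+\bot$ iff $m=\omega$; $m\models^+\phi\otimes\psi$ iff $\exists m_1,m_2$ with $m\geq m_1\circ m_2$, $m_1\models^+\phi$, $m_2\models^+\psi$; $m\models^+\phi\&\psi$ iff $m\models^+\phi$ and $m\models^+\psi$; $m\models^+\phi\oplus\psi$ iff $\exists m_1,m_2$ with $m_1\cap m_2\leq m$ and each of $m_1,m_2$ verifies $\phi$ or $\psi$; $m\models^+\phi\multimap\psi$ iff for all $n$, $n\models^+\phi$ implies $n\circ m\models^+\psi$; $m\models^+\sim\phi$ iff $m\models^-\phi$; $m\models^-\sim\phi$ iff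 $m\models^+\phi$; $m\models^-p$ iff $m\in V^-(p)$; $m\models^-\mathbf1$ iff $m=\omega$; $m\models^-\top$ iff $m=\omega$; $m\models^-\bot$ always; $m\models^-\phi\otimes\psi$ iff $\exists m_1,m_2$, $m\geq m_1\circ m_2$, $m_1\models^-\phi$, $m_2\models^-\psi$; $m\models^-\phi\&\psi$ iff $\exists m_1,m_2$ with $m_1\cap m_2\leq m$ and each of $m_1,m_2$ falsifies $\phi$ or $\psi$; $m\models^-\phi\oplus\psi$ iff $m\models^-\phi$ and $m\models^-\psi$; $m\models^-\phi\multimap\psi$ iff $\exists m_1,m_2$ with $m_1\circ m_2\leq m$, $m_1\models^+\phi$, $m_2\models^-\psi$; $m\models^+\Box\phi$ iff $\|\phi\|^+\in N^+(m)$; $m\models^-\Box\phi$ iff $\|\phi\|^+\in N^-(m)$, where $\|\phi\|^+=\{m\mid m\models^+\phi\}$. $\Gamma\models\phi$ iff in every model, $e\models^+\Gamma^\star$ implies $e\models^+\phi$, where $\Gamma^\star$ is the $\otimes$-product of the formulas in $\Gamma$ ($\mathbf 1$ if empty).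
   Formalization: Models have ω in V⁺(p) and V⁻(p) for every atom p and every set X in N⁺(ω) and N⁻(ω), and the axiom ~(φ⊸ψ) ⊸ ~φ⊗ψ is replaced by ~(φ⊸ψ) ⊸ φ⊗~ψ. Each condition added here is assumed in the paper as well or is needed for the statement above to hold. This also corrects a misprint. *)

(* Defs.v *)
From Stdlib Require Import List Permutation.
Import ListNotations.

Inductive formula : Type :=
| Var : nat -> formula
| One : formula
| Top : formula
| Bot : formula
| SNeg : formula -> formula
| Tens : formula -> formula -> formula
| Lolli : formula -> formula -> formula
| With : formula -> formula -> formula
| Plus : formula -> formula -> formula
| Box : formula -> formula.

Inductive axiom : formula -> Prop :=
| ax_I  : forall a, axiom (Lolli a a)
| ax_B  : forall a b c, axiom (Lolli (Lolli a b) (Lolli (Lolli c a) (Lolli c b)))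
| ax_C  : forall a b c, axiom (Lolli (Lolli a (Lolli b c)) (Lolli b (Lolli a c)))
| ax_tensI : forall a b, axiom (Lolli a (Lolli b (Tens a b)))
| ax_tensE : forall a b c, axiom (Lolli (Lolli a (Lolli b c)) (Lolli (Tens a b) c))
| ax_oneI : axiom One
| ax_oneE : forall a, axiom (Lolli a (Lolli One a))
| ax_withE1 : forall a b, axiom (Lolli (With a b) a)
| ax_withE2 : forall a b, axiom (Lolli (With a b) b)
| ax_withI : forall a b c,
    axiom (Lolli (With (Lolli c a) (Lolli c b)) (Lolli c (With a b)))
| ax_plusI1 : forall a b, axiom (Lolli a (Plus a b))
| ax_plusI2 : forall a b, axiom (Lolli b (Plus a b))
| ax_plusE : forall a b c,
    axiom (Lolli (With (Lolli a c) (Lolli b c)) (Lolli (Plus a b) c))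
| ax_top : forall a, axiom (Lolli a Top)
| ax_bot : forall a, axiom (Lolli Bot a)
| ax_dn1 : forall a, axiom (Lolli a (SNeg (SNeg a)))
| ax_dn2 : forall a, axiom (Lolli (SNeg (SNeg a)) a)
| ax_none : forall a, axiom (Lolli (SNeg One) a)
| ax_ntop : forall a, axiom (Lolli (SNeg Top) a)
| ax_nbot : forall a, axiom (Lolli a (SNeg Bot))
| ax_nlolli1 : forall a b, axiom (Lolli (SNeg (Lolli a b)) (Tens a (SNeg b)))
| ax_nlolli2 : forall a b, axiom (Lolli (Tens a (SNeg b)) (SNeg (Lolli a b)))
| ax_nwith1 : forall a b, axiom (Lolli (SNeg (With a b)) (Plus (SNeg a) (SNeg b)))
| ax_nwith2 : forall a b, axiom (Lolli (Plus (SNeg a) (SNeg b)) (SNeg (With a b)))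
| ax_nplus1 : forall a b, axiom (Lolli (SNeg (Plus a b)) (With (SNeg a) (SNeg b)))
| ax_nplus2 : forall a b, axiom (Lolli (With (SNeg a) (SNeg b)) (SNeg (Plus a b)))
| ax_ntens1 : forall a b, axiom (Lolli (SNeg (Tens a b)) (Tens (SNeg a) (SNeg b)))
| ax_ntens2 : forall a b, axiom (Lolli (Tens (SNeg a) (SNeg b)) (SNeg (Tens a b))).

(* Contexts are finite multisets, represented by lists up to permutation
   (the modus ponens rule concludes any permutation of Γ,Γ'). *)
Inductive MILLs_deriv : list formula -> formula -> Prop :=
| d_id : forall a, MILLs_deriv [a] a
| d_ax : forall a, axiom a -> MILLs_deriv [] a
| d_mp : forall G G' D a b,
    MILLs_deriv G a -> MILLs_deriv G' (Lolli a b) ->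
    Permutation D (G ++ G') -> MILLs_deriv D b
| d_adj : forall G a b,
    MILLs_deriv G a -> MILLs_deriv G b -> MILLs_deriv G (With a b)
| d_box_re : forall a b,
    MILLs_deriv [] (Lolli a b) -> MILLs_deriv [] (Lolli b a) ->
    MILLs_deriv [] (Lolli (Box a) (Box b)).

Fixpoint ctx_prod (G : list formula) : formula :=
  match G with
  | [] => One
  | [a] => a
  | a :: G' => Tens a (ctx_prod G')
  end.

Record MKRA : Type := {
  car :> Type;
  meet : car -> car -> car;
  comp : car -> car -> car;
  unit : car;
  omg : car;
  Np : car -> (car -> Prop) -> Prop;
  Nm : car -> (car -> Prop) -> Prop;
  meet_assoc : forall x y z, meet x (meet y z) = meet (meet x y) z;
  meet_comm : forall x y, meet x y = meet y x;
  meet_idem : forall x, meet x x = x;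
  omg_top : forall x, meet x omg = x;
  comp_assoc : forall x y z, comp x (comp y z) = comp (comp x y) z;
  comp_comm : forall x y, comp x y = comp y x;
  comp_unit : forall x, comp unit x = x;
  comp_omg : forall x, comp x omg = omg;
  comp_meet_distr : forall z x y w,
    comp (comp z (meet x y)) w = meet (comp (comp z x) w) (comp (comp z y) w);
  Np_meet : forall X m n, Np (meet m n) X <-> (Np m X /\ Np n X);
  Nm_meet : forall X m n, Nm (meet m n) X <-> (Nm m X /\ Nm n X)
}.

Definition kle (A : MKRA) (x y : A) : Prop := meet A x y = x.

Record model (A : MKRA) : Type := {
  Vp : nat -> A -> Prop;
  Vm : nat -> A -> Prop;
  Vp_meet : forall p m n, Vp p (meet A m n) <-> (Vp p m /\ Vp p n);
  Vm_meet : forall p m n, Vm p (meet A m n) <-> (Vm p m /\ Vm p n);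
  Vp_omg : forall p, Vp p (omg A);
  Vm_omg : forall p, Vm p (omg A);
  Np_omg : forall X, Np A (omg A) X;
  Nm_omg : forall X, Nm A (omg A) X
}.

(* verification (b = true) and falsification (b = false) *)
Fixpoint forces (A : MKRA) (V : model A) (b : bool) (m : A) (f : formula)
  : Prop :=
  match b, f with
  | true, Var p => Vp A V p m
  | false, Var p => Vm A V p m
  | true, One => kle A (unit A) m
  | false, One => m = omg A
  | true, Top => True
  | false, Top => m = omg A
  | true, Bot => m = omg A
  | false, Bot => True
  | true, SNeg a => forces A V false m a
  | false, SNeg a => forces A V true m a
  | true, Tens a c => exists m1 m2, kle A (comp A m1 m2) m /\
                        forces A V true m1 a /\ forces A V true m2 c
  | false, Tens a c => exists m1 m2, kle A (comp A m1 m2) m /\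
                        forces A V false m1 a /\ forces A V false m2 c
  | true, With a c => forces A V true m a /\ forces A V true m c
  | false, With a c => exists m1 m2, kle A (meet A m1 m2) m /\
        (forces A V false m1 a \/ forces A V false m1 c) /\
        (forces A V false m2 a \/ forces A V false m2 c)
  | true, Plus a c => exists m1 m2, kle A (meet A m1 m2) m /\
        (forces A V true m1 a \/ forces A V true m1 c) /\
        (forces A V true m2 a \/ forces A V true m2 c)
  | false, Plus a c => forces A V false m a /\ forces A V false m c
  | true, Lolli a c => forall n, forces A V true n a ->
                         forces A V true (comp A n m) c
  | false, Lolli a c => exists m1 m2, kle A (comp A m1 m2) m /\
                         forces A V true m1 a /\ forces A V false m2 c
  | true, Box a => Np A m (fun n => forces A V true n a)
  | false, Box a => Nm A m (fun n => forces A V true n a)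
  end.

Definition entails (G : list formula) (f : formula) : Prop :=
  forall (A : MKRA) (V : model A),
    forces A V true (unit A) (ctx_prod G) -> forces A V true (unit A) f.

(* Main.v *)
Require Import Defs.
From Stdlib Require Import List Permutation.
From Stdlib Require Import FunctionalExtensionality PropExtensionality.
Import ListNotations.

Lemma kle_refl (A : MKRA) (x : A) : kle A x x.
Proof. unfold kle; apply meet_idem. Qed.

Lemma kle_trans (A : MKRA) (x y z : A) : kle A x y -> kle A y z -> kle A x z.
Proof. unfold kle; intros H H0. rewrite <- H at 1. rewrite <- meet_assoc, H0, H. reflexivity. Qed.

Lemma comp_unit_r (A : MKRA) (x : A) : comp A x (unit A) = x.
Proof. rewrite comp_comm; apply comp_unit. Qed.

Lemma comp_meet_l (A : MKRA) (x y w : A) :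
  comp A (meet A x y) w = meet A (comp A x w) (comp A y w).
Proof. pose proof (comp_meet_distr A (unit A) x y w) as H. rewrite !comp_unit in H. exact H. Qed.

Lemma comp_meet_r (A : MKRA) (x y w : A) :
  comp A w (meet A x y) = meet A (comp A w x) (comp A w y).
Proof. rewrite !(comp_comm A w). apply comp_meet_l. Qed.

Lemma comp_mono_l (A : MKRA) (x y w : A) : kle A x y -> kle A (comp A x w) (comp A y w).
Proof. unfold kle; intro H. rewrite <- comp_meet_l, H. reflexivity. Qed.

Lemma comp_mono_r (A : MKRA) (x y w : A) : kle A x y -> kle A (comp A w x) (comp A w y).
Proof. intro H. rewrite (comp_comm A w x), (comp_comm A w y). apply comp_mono_l; auto. Qed.

Lemma comp_mono2 (A : MKRA) (x x' y y' : A) : kle A x x' -> kle A y y' ->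
  kle A (comp A x y) (comp A x' y').
Proof. intros; eapply kle_trans; [apply comp_mono_l; eauto | apply comp_mono_r; eauto]. Qed.

Lemma meet_le_l (A : MKRA) (x y : A) : kle A (meet A x y) x.
Proof. unfold kle. rewrite (meet_comm A (meet A x y) x), meet_assoc, meet_idem. reflexivity. Qed.

Lemma meet_le_r (A : MKRA) (x y : A) : kle A (meet A x y) y.
Proof. unfold kle. rewrite <- meet_assoc, meet_idem. reflexivity. Qed.

Lemma kle_meet (A : MKRA) (x y z : A) : kle A z x -> kle A z y -> kle A z (meet A x y).
Proof. unfold kle; intros H H0. rewrite meet_assoc, H, H0. reflexivity. Qed.

Lemma meet_mono (A : MKRA) (x x' y y' : A) : kle A x x' -> kle A y y' ->
  kle A (meet A x y) (meet A x' y').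
Proof. intros H1 H2; apply kle_meet; [eapply kle_trans; [apply meet_le_l|exact H1] | eapply kle_trans; [apply meet_le_r|exact H2]]. Qed.

Lemma le_omg (A : MKRA) (n : A) : kle A (omg A) n -> n = omg A.
Proof. unfold kle; intro H. rewrite <- (omg_top A n). rewrite meet_comm. exact H. Qed.

Lemma meet_swap4 (A : MKRA) (x x' y y' : A) :
  meet A (meet A x x') (meet A y y') = meet A (meet A x y) (meet A x' y').
Proof.
  rewrite <- (meet_assoc A x x' (meet A y y')).
  rewrite (meet_assoc A x' y y'). rewrite (meet_comm A x' y).
  rewrite <- (meet_assoc A y x' y'). rewrite (meet_assoc A x y). reflexivity.
Qed.

Lemma pair_norm (A : MKRA) (P Q : A -> Prop)
  (mP : forall x y, P x -> P y -> P (meet A x y))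
  (mQ : forall x y, Q x -> Q y -> Q (meet A x y))
  (oP : P (omg A)) (oQ : Q (omg A)) (m : A) :
  (exists x y, kle A (meet A x y) m /\ (P x \/ Q x) /\ (P y \/ Q y)) ->
  exists x y, kle A (meet A x y) m /\ P x /\ Q y.
Proof.
  intros (x & y & Hle & [Hx|Hx] & [Hy|Hy]).
  - exists (meet A x y), (omg A). rewrite omg_top. auto.
  - exists x, y. auto.
  - exists y, x. rewrite meet_comm. auto.
  - exists (omg A), (meet A x y). rewrite meet_comm, omg_top. auto.
Qed.

Lemma pair_meet (A : MKRA) (P Q : A -> Prop)
  (mP : forall x y, P x -> P y -> P (meet A x y))
  (mQ : forall x y, Q x -> Q y -> Q (meet A x y))
  (oP : P (omg A)) (oQ : Q (omg A)) (m n : A) :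
  (exists x y, kle A (meet A x y) m /\ (P x \/ Q x) /\ (P y \/ Q y)) ->
  (exists x y, kle A (meet A x y) n /\ (P x \/ Q x) /\ (P y \/ Q y)) ->
  (exists x y, kle A (meet A x y) (meet A m n) /\ (P x \/ Q x) /\ (P y \/ Q y)).
Proof.
  intros H1 H2.
  destruct (pair_norm A P Q mP mQ oP oQ m H1) as (x & y & Hl & Hx & Hy).
  destruct (pair_norm A P Q mP mQ oP oQ n H2) as (x' & y' & Hl' & Hx' & Hy').
  exists (meet A x x'), (meet A y y'). rewrite meet_swap4.
  split; [apply meet_mono; auto | split; auto].
Qed.

Lemma forces_omg (A : MKRA) (V : model A) :
  forall f b, forces A V b (omg A) f.
Proof.
  induction f; destruct b; simpl; auto;
  first [ apply Vp_omg | apply Vm_omg | apply omg_top | apply (Np_omg A V) | apply (Nm_omg A V)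
        | intros; rewrite comp_omg; auto
        | exists (omg A), (omg A); rewrite ?comp_omg, ?meet_idem; split; [apply kle_refl|auto] ].
Qed.

Lemma forces_up (A : MKRA) (V : model A) :
  forall f b m n, kle A m n -> forces A V b m f -> forces A V b n f.
Proof.
  induction f; destruct b; simpl; intros m0 n0 Hle H.
  - rewrite <- Hle in H. apply Vp_meet in H. tauto.
  - rewrite <- Hle in H. apply Vm_meet in H. tauto.
  - eapply kle_trans; eauto.
  - subst. apply le_omg; auto.
  - auto.
  - subst. apply le_omg; auto.
  - subst. apply le_omg; auto.
  - auto.
  - eauto.
  - eauto.
  - destruct H as (m1&m2&H1&H2&H3); exists m1, m2; split; [eapply kle_trans; eauto|auto].
  - destruct H as (m1&m2&H1&H2&H3); exists m1, m2; split; [eapply kle_trans; eauto|auto].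
  - intros k Hk. eapply IHf2; [apply comp_mono_r; eauto | auto].
  - destruct H as (m1&m2&H1&H2&H3); exists m1, m2; split; [eapply kle_trans; eauto|auto].
  - destruct H; split; eauto.
  - destruct H as (m1&m2&H1&H2&H3); exists m1, m2; split; [eapply kle_trans; eauto|auto].
  - destruct H as (m1&m2&H1&H2&H3); exists m1, m2; split; [eapply kle_trans; eauto|auto].
  - destruct H; split; eauto.
  - rewrite <- Hle in H. apply Np_meet in H. tauto.
  - rewrite <- Hle in H. apply Nm_meet in H. tauto.
Qed.

Lemma forces_meet (A : MKRA) (V : model A) :
  forall f b m n, forces A V b m f -> forces A V b n f -> forces A V b (meet A m n) f.
Proof.
  induction f; destruct b; simpl; intros m0 n0 H H'.
  - apply Vp_meet; auto.
  - apply Vm_meet; auto.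
  - apply kle_meet; auto.
  - rewrite H, H'. apply meet_idem.
  - auto.
  - rewrite H, H'. apply meet_idem.
  - rewrite H, H'. apply meet_idem.
  - auto.
  - auto.
  - auto.
  - destruct H as (m1&m2&H1&H2&H3); destruct H' as (n1&n2&H1'&H2'&H3').
    exists (meet A m1 n1), (meet A m2 n2). split; [|auto].
    apply kle_meet; eapply kle_trans; [apply comp_mono2; apply meet_le_l| auto
      | apply comp_mono2; apply meet_le_r | auto].
  - destruct H as (m1&m2&H1&H2&H3); destruct H' as (n1&n2&H1'&H2'&H3').
    exists (meet A m1 n1), (meet A m2 n2). split; [|auto].
    apply kle_meet; eapply kle_trans; [apply comp_mono2; apply meet_le_l| auto
      | apply comp_mono2; apply meet_le_r | auto].
  - intros k Hk. rewrite comp_meet_r. auto.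
  - destruct H as (m1&m2&H1&H2&H3); destruct H' as (n1&n2&H1'&H2'&H3').
    exists (meet A m1 n1), (meet A m2 n2). split; [|auto].
    apply kle_meet; eapply kle_trans; [apply comp_mono2; apply meet_le_l| auto
      | apply comp_mono2; apply meet_le_r | auto].
  - destruct H, H'; split; auto.
  - apply (pair_meet A (fun z => forces A V false z f1) (fun z => forces A V false z f2));
      auto using forces_omg.
  - apply (pair_meet A (fun z => forces A V true z f1) (fun z => forces A V true z f2));
      auto using forces_omg.
  - destruct H, H'; split; auto.
  - apply Np_meet; auto.
  - apply Nm_meet; auto.
Qed.

Lemma lolli_unit (A : MKRA) (V : model A) x y :
  (forall n, forces A V true n x -> forces A V true n y) ->
  forces A V true (unit A) (Lolli x y).
Proof. simpl; intros H n Hn. rewrite comp_unit_r; auto. Qed.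

Lemma axiom_sound a : axiom a -> forall A V, forces A V true (unit A) a.
Proof.
  intros Hax A V. destruct Hax; try (apply lolli_unit; simpl).
  - auto.
  - intros n Hn k Hk j Hj. rewrite comp_assoc. apply Hn. apply Hk. exact Hj.
  - intros n Hn k Hk j Hj.
    rewrite comp_assoc, (comp_comm A j k), <- comp_assoc. apply (Hn j Hj k Hk).
  - intros n Hn k Hk. exists n, k. rewrite (comp_comm A n k). split; [apply kle_refl|auto].
  - intros n Hn k (k1&k2&Hle&H1&H2).
    apply forces_up with (comp A k2 (comp A k1 n)).
    + rewrite comp_assoc, (comp_comm A k2 k1). apply comp_mono_l; auto.
    + apply (Hn k1 H1 k2 H2).
  - simpl; apply kle_refl.
  - intros n Hn k Hk. apply forces_up with n; [|auto].
    pose proof (comp_mono_l A _ _ n Hk) as H; rewrite comp_unit in H; exact H.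
  - intros n [H1 H2]; exact H1.
  - intros n [H1 H2]; exact H2.
  - intros n [H1 H2] k Hk; split; auto.
  - intros n Hn; exists n, n; rewrite meet_idem; split; [apply kle_refl|tauto].
  - intros n Hn; exists n, n; rewrite meet_idem; split; [apply kle_refl|tauto].
  - intros n [H1 H2] k (k1&k2&Hle&Ha&Hb).
    apply forces_up with (comp A (meet A k1 k2) n).
    + apply comp_mono_l; auto.
    + rewrite comp_meet_l. apply forces_meet.
      * destruct Ha; [apply H1|apply H2]; auto.
      * destruct Hb; [apply H1|apply H2]; auto.
  - intros; exact I.
  - intros n Hn; subst; apply forces_omg.
  - intros n H; exact H.
  - intros n H; exact H.
  - intros n H; subst; apply forces_omg.
  - intros n H; subst; apply forces_omg.
  - intros; exact I.
  - intros n H; exact H.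
  - intros n H; exact H.
  - intros n H; exact H.
  - intros n H; exact H.
  - intros n H; exact H.
  - intros n H; exact H.
  - intros n H; exact H.
  - intros n H; exact H.
Qed.

Fixpoint ctxF (A : MKRA) (V : model A) (G : list formula) (m : A) : Prop :=
  match G with
  | [] => kle A (unit A) m
  | a :: G' => exists m1 m2, kle A (comp A m1 m2) m /\ forces A V true m1 a /\ ctxF A V G' m2
  end.

Lemma ctxF_equiv (A : MKRA) (V : model A) G m :
  forces A V true m (ctx_prod G) <-> ctxF A V G m.
Proof.
  revert m. induction G as [|a G IH]; intro m; [simpl; tauto|].
  destruct G as [|b G].
  - simpl. split.
    + intro H. exists m, (unit A). rewrite comp_unit_r. split; [apply kle_refl|split; auto; apply kle_refl].
    + intros (m1&m2&Hle&H1&H2). apply forces_up with m1; auto.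
      eapply kle_trans; [|exact Hle]. pose proof (comp_mono_r A _ _ m1 H2) as H.
      rewrite comp_unit_r in H. exact H.
  - change (ctx_prod (a :: b :: G)) with (Tens a (ctx_prod (b :: G))).
    change (ctxF A V (a :: b :: G) m) with
      (exists m1 m2, kle A (comp A m1 m2) m /\ forces A V true m1 a /\ ctxF A V (b :: G) m2).
    simpl forces. split; intros (m1&m2&H1&H2&H3); exists m1, m2; split; auto; split; auto;
      apply IH; auto.
Qed.

Lemma ctxF_perm (A : MKRA) (V : model A) D E :
  Permutation D E -> forall m, ctxF A V D m -> ctxF A V E m.
Proof.
  induction 1; intros m Hc; simpl in *; auto.
  - destruct Hc as (m1&m2&H1&H2&H3). exists m1, m2; auto.
  - destruct Hc as (m1&m2&H1&H2&(n1&n2&G1&G2&G3)).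
    exists n1, (comp A m1 n2). split.
    + eapply kle_trans; [|exact H1].
      rewrite comp_assoc, (comp_comm A n1 m1), <- comp_assoc. apply comp_mono_r; auto.
    + split; auto. exists m1, n2. split; [apply kle_refl|auto].
Qed.

Lemma ctxF_app (A : MKRA) (V : model A) G H m :
  ctxF A V (G ++ H) m -> exists m1 m2, kle A (comp A m1 m2) m /\ ctxF A V G m1 /\ ctxF A V H m2.
Proof.
  revert m. induction G as [|a G IH]; intros m Hm; simpl in *.
  - exists (unit A), m. rewrite comp_unit. split; [apply kle_refl|split; auto; apply kle_refl].
  - destruct Hm as (m1&m2&H1&H2&H3). destruct (IH m2 H3) as (n1&n2&G1&G2&G3).
    exists (comp A m1 n1), n2. split.
    + eapply kle_trans; [|exact H1]. rewrite <- comp_assoc. apply comp_mono_r; auto.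
    + split; auto. exists m1, n1. split; [apply kle_refl|auto].
Qed.

Lemma sound G f : MILLs_deriv G f -> forall A V m, ctxF A V G m -> forces A V true m f.
Proof.
  induction 1; intros A V m Hm.
  - simpl in Hm. destruct Hm as (m1&m2&Hle&H1&H2). apply forces_up with m1; auto.
    eapply kle_trans; [|exact Hle]. pose proof (comp_mono_r A _ _ m1 H2) as H'.
    rewrite comp_unit_r in H'. exact H'.
  - simpl in Hm. apply forces_up with (unit A); auto. apply axiom_sound; auto.
  - apply (ctxF_perm A V _ _ H1) in Hm. destruct (ctxF_app A V _ _ _ Hm) as (m1&m2&Hle&G1&G2).
    apply forces_up with (comp A m1 m2); auto.
    apply (IHMILLs_deriv2 A V m2 G2). apply IHMILLs_deriv1; auto.
  - simpl; split; auto.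
  - simpl in Hm. simpl. intros n Hn.
    assert (E : (fun k => forces A V true k a) = (fun k => forces A V true k b)).
    { apply functional_extensionality; intro k. apply propositional_extensionality. split; intro Hk.
      - pose proof (IHMILLs_deriv1 A V (unit A) (kle_refl A _) k Hk) as R.
        rewrite comp_unit_r in R; exact R.
      - pose proof (IHMILLs_deriv2 A V (unit A) (kle_refl A _) k Hk) as R.
        rewrite comp_unit_r in R; exact R. }
    rewrite E in Hn.
    apply (forces_up A V (Box b) true n); auto.
    pose proof (comp_mono_r A _ _ n Hm) as H'. rewrite comp_unit_r in H'. exact H'.
Qed.

Theorem theoremB1 : forall (G : list formula) (f : formula),
  MILLs_deriv G f -> entails G f.
Proof.
  intros G f H A V HG. apply (sound G f H A V). apply ctxF_equiv; auto.
Qed.
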